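(* Let $\mathcal F=\{D_4,P\}$, where $D_4\in\{0,1\}^{4\times4}$ has support $\{(1,1),(2,2),(3,3),(4,4)\}$ and $P\in\{0,1\}^{4\times3}$ has support $\{(1,2),(2,1),(3,2),(4,3)\}$. Then the class $\mathrm{Av}(\mathcal F)$ is row-bounded but not column-bounded.
   Context: All matrices are binary; rows numbered top to bottom, columns left to right; $(i,j)$ is the entry in row $i$, column $j$; $(a,b]=\{a+1,\dots,b\}$. A pattern $P\in\{0,1\}^{k\times\ell}$ is an interval minor of $M\in\{0,1\}^{m\times n}$ if there are integers $0=r_0<\dots<r_k=m$ and $0=c_0<\dots<c_\ell=n$ such that for each 1-entry $(i,j)$ of $P$ the submatrix of $M$ on rows $(r_{i-1},r_i]$ and columns $(c_{j-1},c_j]$ contains a 1-entry; otherwise $M$ avoids $P$. For a set $\mathcal F$ of patterns, $\mathrm{Av}(\mathcal F)$ is the set of binary matrices avoiding every pattern in $\mathcal F$. $M\in\mathcal C$ is critical for $\mathcal C$ if changing any single 0-entry of $M$ into a 1-entry yields a matrix not in $\mathcal C$. A 0-run is a maximal set of consecutive 0-entries within a single row or a single column; the complexity of a line is the number of 0-runs in it. $\mathcal C$ is row-bounded (column-bounded) if the supremum over all matrices critical for $\mathcal C$ of the maximum complexity of a row (column) is finite. *)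

(* Defs.v *)
(* binary matrices as 'M[bool]_(m, n); rows/columns 0-indexed. *)
From Stdlib Require List.
From mathcomp Require Import all_boot ssralg matrix.
Set Implicit Arguments. Unset Strict Implicit. Unset Printing Implicit Defensive.

Record pattern := Pattern { pk : nat; pl : nat; pmx : 'M[bool]_(pk, pl) }.

(* P (k x l) is an interval minor of M (m x n): there are
   0 = r_0 < ... < r_k = m and 0 = c_0 < ... < c_l = n such that for every
   1-entry (i,j) of P (0-indexed), the block of rows [r_i, r_{i+1}) and
   columns [c_j, c_{j+1}) (0-indexed, i.e. (r_{i},r_{i+1}] 1-indexed)
   contains a 1-entry of M. *)
Definition interval_minor (k l m n : nat) (P : 'M[bool]_(k, l)) (M : 'M[bool]_(m, n)) : Prop :=
  exists (r c : nat -> nat),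
    [/\ r 0 = 0, r k = m & (forall i, i < k -> r i < r i.+1)] /\
    [/\ c 0 = 0, c l = n & (forall j, j < l -> c j < c j.+1)] /\
    (forall (i : 'I_k) (j : 'I_l), P i j ->
          exists (a : 'I_m) (b : 'I_n),
            [&& r i <= a, a < r i.+1, c j <= b, b < c j.+1 & M a b]).

Definition avoids (k l m n : nat) (P : 'M[bool]_(k, l)) (M : 'M[bool]_(m, n)) : Prop :=
  ~ interval_minor P M.

Definition mclass := forall m n : nat, 'M[bool]_(m, n) -> Prop.

Definition Av (F : seq pattern) : mclass :=
  fun m n M => forall Q, List.In Q F -> avoids (pmx Q) M.

Definition set1 m n (M : 'M[bool]_(m, n)) (i : 'I_m) (j : 'I_n) : 'M[bool]_(m, n) :=
  \matrix_(a < m, b < n) (M a b || ((a == i) && (b == j))).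

Definition critical (C : mclass) m n (M : 'M[bool]_(m, n)) : Prop :=
  C m n M /\ forall (i : 'I_m) (j : 'I_n), M i j = false -> ~ C m n (set1 M i j).

(* number of maximal runs of consecutive 0s (false) in a line;
   prev is the previous entry (true = "not a 0" at the start). *)
Fixpoint zero_runs_from (prev : bool) (s : seq bool) : nat :=
  match s with
  | [::] => 0
  | x :: s' => (prev && ~~ x) + zero_runs_from x s'
  end.
Definition zero_runs (s : seq bool) : nat := zero_runs_from true s.

Definition row_complexity m n (M : 'M[bool]_(m, n)) (i : 'I_m) : nat :=
  zero_runs [seq M i j | j <- enum 'I_n].
Definition col_complexity m n (M : 'M[bool]_(m, n)) (j : 'I_n) : nat :=
  zero_runs [seq M i j | i <- enum 'I_m].

Definition row_bounded (C : mclass) : Prop :=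
  exists B : nat, forall m n (M : 'M[bool]_(m, n)), critical C M ->
    forall i : 'I_m, row_complexity M i <= B.
Definition column_bounded (C : mclass) : Prop :=
  exists B : nat, forall m n (M : 'M[bool]_(m, n)), critical C M ->
    forall j : 'I_n, col_complexity M j <= B.

Definition D4 : 'M[bool]_(4, 4) := \matrix_(i < 4, j < 4) (nat_of_ord i == nat_of_ord j).
Definition P43 : 'M[bool]_(4, 3) :=
  \matrix_(i < 4, j < 3) ((nat_of_ord i, nat_of_ord j) \in [:: (0, 1); (1, 0); (2, 1); (3, 2)]).

Definition F_D4_P : seq pattern := [:: Pattern D4; Pattern P43].

(* Main.v *)
Require Import Defs.
From mathcomp Require Import all_boot ssralg matrix.
From mathcomp Require Import zify.
From Stdlib Require Import Classical.
Set Implicit Arguments. Unset Strict Implicit. Unset Printing Implicit Defensive.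

Definition ent m n (M : 'M[bool]_(m, n)) (a b : nat) : bool :=
  [exists i : 'I_m, exists j : 'I_n, [&& (i == a :> nat), (j == b :> nat) & M i j]].

Lemma entP m n (M : 'M[bool]_(m, n)) a b :
  reflect (exists (i : 'I_m) (j : 'I_n), [/\ nat_of_ord i = a, nat_of_ord j = b & M i j]) (ent M a b).
Proof.
apply: (iffP existsP).
  by case=> i /existsP [j /and3P [/eqP ? /eqP ? ?]]; exists i, j.
by case=> i [j [? ? ?]]; exists i; apply/existsP; exists j; subst; rewrite !eqxx.
Qed.

Lemma entE m n (M : 'M[bool]_(m, n)) (i : 'I_m) (j : 'I_n) : ent M i j = M i j.
Proof.
apply/entP/idP => [[i' [j' [/val_inj -> /val_inj -> //]]]|]; by exists i, j.
Qed.

Lemma ent_bound m n (M : 'M[bool]_(m, n)) a b : ent M a b -> a < m /\ b < n.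
Proof. by case/entP=> i [j [<- <- _]]. Qed.

Ltac bsplit := repeat (apply/andP; split); try done; try lia.

Definition hasD4 (f : nat -> nat -> bool) : Prop :=
  exists a0 a1 a2 a3 b0 b1 b2 b3,
    [/\ a0 < a1, a1 < a2, a2 < a3, b0 < b1 & (b1 < b2 /\ b2 < b3)] /\
    [/\ f a0 b0, f a1 b1, f a2 b2 & f a3 b3].

Definition hasP (f : nat -> nat -> bool) : Prop :=
  exists a1 a2 a3 a4 c1 c2 c3 c4,
    [/\ a1 < a2, a2 < a3, a3 < a4, c2 < c1 & (c2 < c3 /\ c1 < c4 /\ c3 < c4)] /\
    [/\ f a1 c1, f a2 c2, f a3 c3 & f a4 c4].

Lemma D4E (i j : 'I_4) : D4 i j = (nat_of_ord i == j).
Proof. by rewrite /D4 mxE. Qed.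

Lemma P43E (i : 'I_4) (k : 'I_3) : P43 i k = ((nat_of_ord i, nat_of_ord k) \in [:: (0, 1); (1, 0); (2, 1); (3, 2)]).
Proof. by rewrite /P43 mxE. Qed.

Lemma minorD4 m n (M : 'M[bool]_(m, n)) : interval_minor D4 M <-> hasD4 (ent M).
Proof.
split.
  case=> r [c [[r0 rk rinc] [[c0 cl cinc] H]]].
  have G : forall k (hk : k < 4), exists a b, [/\ r k <= a < r k.+1, c k <= b < c k.+1 & ent M a b].
    move=> k hk.
    have := H (Ordinal hk) (Ordinal hk); rewrite D4E eqxx => /(_ isT) [a [b /and5P [? ? ? ? Mab]]].
    by exists a, b; rewrite entE; split => //; apply/andP.
  case: (G 0 isT) => a0 [b0 [/andP [? ?] /andP [? ?] ?]].
  case: (G 1 isT) => a1 [b1 [/andP [? ?] /andP [? ?] ?]].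
  case: (G 2 isT) => a2 [b2 [/andP [? ?] /andP [? ?] ?]].
  case: (G 3 isT) => a3 [b3 [/andP [? ?] /andP [? ?] ?]].
  exists a0, a1, a2, a3, b0, b1, b2, b3; split; split => //; lia.
case=> a0 [a1 [a2 [a3 [b0 [b1 [b2 [b3 [[? ? ? ? [? ?]] [E0 E1 E2 E3]]]]]]]]].
case/entP: E0 => i0 [j0 [Hi0 Hj0 M0]].
case/entP: E1 => i1 [j1 [Hi1 Hj1 M1]].
case/entP: E2 => i2 [j2 [Hi2 Hj2 M2]].
case/entP: E3 => i3 [j3 [Hi3 Hj3 M3]].
exists (fun k => nth m [:: 0; a1; a2; a3] k), (fun k => nth n [:: 0; b1; b2; b3] k).
split; [split => //; case=> [|[|[|[|k]]]] //= _; have := ltn_ord i3; lia|].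
split; [split => //; case=> [|[|[|[|k]]]] //= _; have := ltn_ord j3; lia|].
move=> [[|[|[|[|k]]]] hi] // [[|[|[|[|k']]]] hj] //; rewrite D4E //= => _.
- by exists i0, j0; rewrite M0 andbT; bsplit.
- by exists i1, j1; rewrite M1 andbT; bsplit.
- by exists i2, j2; rewrite M2 andbT; bsplit.
- by exists i3, j3; rewrite M3 andbT; have := ltn_ord i3; have := ltn_ord j3; move=> ? ?; bsplit.
Qed.

Lemma minorP m n (M : 'M[bool]_(m, n)) : interval_minor P43 M <-> hasP (ent M).
Proof.
split.
  case=> r [c [[r0 rk rinc] [[c0 cl cinc] H]]].
  have G : forall k l (hk : k < 4) (hl : l < 3), (k, l) \in [:: (0, 1); (1, 0); (2, 1); (3, 2)] ->
     exists a b, [/\ r k <= a < r k.+1, c l <= b < c l.+1 & ent M a b].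
    move=> k l hk hl hkl.
    have := H (Ordinal hk) (Ordinal hl); rewrite P43E => /(_ hkl) [a [b /and5P [? ? ? ? Mab]]].
    by exists a, b; rewrite entE; split => //; apply/andP.
  case: (G 0 1 isT isT isT) => a0 [b0 [/andP [? ?] /andP [? ?] ?]].
  case: (G 1 0 isT isT isT) => a1 [b1 [/andP [? ?] /andP [? ?] ?]].
  case: (G 2 1 isT isT isT) => a2 [b2 [/andP [? ?] /andP [? ?] ?]].
  case: (G 3 2 isT isT isT) => a3 [b3 [/andP [? ?] /andP [? ?] ?]].
  exists a0, a1, a2, a3, b0, b1, b2, b3; split; split => //; lia.
case=> a0 [a1 [a2 [a3 [b0 [b1 [b2 [b3 [[? ? ? ? [? [? ?]]] [E0 E1 E2 E3]]]]]]]]].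
case/entP: E0 => i0 [j0 [Hi0 Hj0 M0]].
case/entP: E1 => i1 [j1 [Hi1 Hj1 M1]].
case/entP: E2 => i2 [j2 [Hi2 Hj2 M2]].
case/entP: E3 => i3 [j3 [Hi3 Hj3 M3]].
subst.
exists (fun k => nth m [:: 0; nat_of_ord i1; nat_of_ord i2; nat_of_ord i3] k),
       (fun k => nth n [:: 0; j1.+1; (maxn j0 j2).+1] k).
have := ltn_ord i3; have := ltn_ord j3 => ? ?.
split; [split => //; case=> [|[|[|[|k]]]] //= _; lia|].
split; [split => //; case=> [|[|[|k]]] //= _; lia|].
move=> [[|[|[|[|k]]]] hi] // [[|[|[|k']]] hj] //; rewrite P43E //= => _.
- by exists i0, j0; rewrite M0 andbT; bsplit.
- by exists i1, j1; rewrite M1 andbT; bsplit.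
- by exists i2, j2; rewrite M2 andbT; bsplit.
- by exists i3, j3; rewrite M3 andbT; bsplit.
Qed.

Lemma AvE m n (M : 'M[bool]_(m, n)) : Av F_D4_P M <-> ~ hasD4 (ent M) /\ ~ hasP (ent M).
Proof.
split.
  move=> H; split.
    by move/minorD4; apply: (H (Pattern D4)); left.
  by move/minorP; apply: (H (Pattern P43)); right; left.
case=> nD nP Q [<-|[<-|[]]] /=.
  by move/minorD4.
by move/minorP.
Qed.

Lemma ent_set1 m n (M : 'M[bool]_(m, n)) (i : 'I_m) (j : 'I_n) a b :
  ent (Defs.set1 M i j) a b = ent M a b || ((a == i) && (b == j)).
Proof.
apply/idP/idP.
  case/entP=> i' [j' [<- <-]]; rewrite /Defs.set1 mxE entE.
  by case/orP=> [->//|/andP [/eqP -> /eqP ->]]; rewrite !eqxx orbT.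
case/orP.
  by case/entP=> i' [j' [<- <-]]; rewrite entE /Defs.set1 mxE => ->.
by case/andP=> /eqP -> /eqP ->; rewrite entE /Defs.set1 mxE !eqxx orbT.
Qed.

Definition zr (prev : bool) (g : nat -> bool) lo len := zero_runs_from prev (map g (iota lo len)).

Fixpoint altO (g : nat -> bool) (n lo : nat) : Prop :=
  exists o, [/\ lo <= o, g o &
    match n with 0 => True | n'.+1 => exists z, [/\ o < z, ~~ g z & altO g n' z.+1] end].

Lemma altO_mono g n lo lo' : altO g n lo -> lo' <= lo -> altO g n lo'.
Proof. by case: n => [|n] [o [Ho ? ?]] ?; exists o; split => //; apply: leq_trans Ho. Qed.

Lemma zr_alt g len : forall lo n,
  (n.+1 <= zr false g lo len -> altO g n lo) /\
  (n.+2 <= zr true g lo len -> exists z, [/\ lo <= z, ~~ g z & altO g n z.+1]).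
Proof.
elim: len => [|len IH] lo n; first by rewrite /zr.
rewrite /zr /=; case E: (g lo) => /=; split.
- rewrite add0n => H; case: n H => [|n] H; first by exists lo; rewrite E.
  exists lo; rewrite E; split => //.
  have [_ IHB] := IH lo.+1 n.
  by case: (IHB H) => z [? ? ?]; exists z.
- rewrite add0n => H; have [_ IHB] := IH lo.+1 n.
  by case: (IHB H) => z [? ? ?]; exists z; split => //; lia.
- rewrite add0n => H; have [IHA _] := IH lo.+1 n.
  by apply: altO_mono (IHA H) _; lia.
- rewrite add1n ltnS => H; have [IHA _] := IH lo.+1 n.
  by exists lo; rewrite E; split => //; apply: IHA.
Qed.

Lemma zr_altT g len lo n : n.+2 <= zr true g lo len -> altO g n lo.
Proof.
case/(proj2 (zr_alt g len lo n)) => z [? ? H]; apply: altO_mono H _; lia.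
Qed.

Lemma zr_lower (g : nat -> bool) n : forall lo len prev,
  2 * n <= len ->
  (forall t, t < n -> g (lo + 2 * t) /\ ~~ g (lo + 2 * t).+1) ->
  n <= zr prev g lo len.
Proof.
elim: n => [//|n IH] lo len prev Hlen H.
case: len Hlen => [|[|len]] Hlen; try lia.
have [h0 h1] := H 0 isT; rewrite addn0 in h0 h1.
rewrite /zr /= h0 (negbTE h1) /= andbF add0n add1n ltnS.
apply: (IH lo.+2) => [|t Ht]; first lia.
have := H t.+1; rewrite ltnS => /(_ Ht).
by have -> : lo + 2 * t.+1 = lo.+2 + 2 * t by lia.
Qed.

Lemma row_zr m n (M : 'M[bool]_(m, n)) i (ent : nat -> nat -> bool)
  (entE : forall (a : 'I_m) (b : 'I_n), ent a b = M a b) :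
  row_complexity M i = zr true (ent i) 0 n.
Proof.
rewrite /row_complexity /zero_runs /zr -val_enum_ord -map_comp.
by congr zero_runs_from; apply: eq_map => j /=; rewrite entE.
Qed.

Lemma col_zr m n (M : 'M[bool]_(m, n)) j (ent : nat -> nat -> bool)
  (entE : forall (a : 'I_m) (b : 'I_n), ent a b = M a b) :
  col_complexity M j = zr true (fun a => ent a j) 0 m.
Proof.
rewrite /col_complexity /zero_runs /zr -val_enum_ord -map_comp.
by congr zero_runs_from; apply: eq_map => a /=; rewrite entE.
Qed.
Definition flip (f : nat -> nat -> bool) i z := fun a b => f a b || ((a == i) && (b == z)).

Definition T1 (f : nat -> nat -> bool) i z := exists ra ca rc cc rd cd,
  [/\ ra < i, i < rc, rc < rd, ca < z & (z < cc /\ cc < cd)] /\ [/\ f ra ca, f rc cc & f rd cd].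
Definition T2 (f : nat -> nat -> bool) i z := exists ra ca rb cb rd cd,
  [/\ ra < rb, rb < i, i < rd, ca < cb & (cb < z /\ z < cd)] /\ [/\ f ra ca, f rb cb & f rd cd].
Definition T3 (f : nat -> nat -> bool) i a := exists r2 c2 r3 c3 r4 c4,
  [/\ i < r2, r2 < r3, r3 < r4, a <= c2 & (c2 < c3 /\ c3 < c4)] /\ [/\ f r2 c2, f r3 c3 & f r4 c4].
Definition T4 (f : nat -> nat -> bool) i z b := exists r1 c1 r2 c2 r4 c4,
  [/\ r1 < r2, r2 < i, i < r4, c2 < c1 & (c1 < b /\ c2 < z /\ z < c4)] /\ [/\ f r1 c1, f r2 c2 & f r4 c4].

Ltac fin := split; split => //; lia.

Lemma typeD4 (f : nat -> nat -> bool) i a z b : f i a -> f i b -> a < z -> z < b -> hasD4 (flip f i z) ->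
  hasD4 f \/ T1 f i z \/ T2 f i z.
Proof.
move=> fa fb az zb.
case=> a0 [a1 [a2 [a3 [b0 [b1 [b2 [b3 [[h1 h2 h3 h4 [h5 h6]] [E0 E1 E2 E3]]]]]]]]].
rewrite /flip in E0 E1 E2 E3.
case/orP: E0 => [E0 | /andP [/eqP e0 /eqP e0']];
case/orP: E1 => [E1 | /andP [/eqP e1 /eqP e1']];
case/orP: E2 => [E2 | /andP [/eqP e2 /eqP e2']];
case/orP: E3 => [E3 | /andP [/eqP e3 /eqP e3']]; try lia.
- by left; exists a0, a1, a2, a3, b0, b1, b2, b3; fin.
- by left; exists a0, a1, a2, i, b0, b1, b2, b; rewrite -e3 in fb *; fin.
- by right; right; exists a0, b0, a1, b1, a3, b3; fin.
- by right; left; exists a0, b0, a2, b2, a3, b3; fin.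
- by left; exists i, a1, a2, a3, a, b1, b2, b3; rewrite -e0 in fa *; fin.
Qed.

Lemma typeP (f : nat -> nat -> bool) i a z b : f i a -> f i b -> a < z -> z < b -> hasP (flip f i z) ->
  hasP f \/ T3 f i a \/ T4 f i z b.
Proof.
move=> fa fb az zb.
case=> a1 [a2 [a3 [a4 [c1 [c2 [c3 [c4 [[h1 h2 h3 h4 [h5 [h6 h7]]] [E1 E2 E3 E4]]]]]]]]].
rewrite /flip in E1 E2 E3 E4.
case/orP: E1 => [E1 | /andP [/eqP e1 /eqP e1']];
case/orP: E2 => [E2 | /andP [/eqP e2 /eqP e2']];
case/orP: E3 => [E3 | /andP [/eqP e3 /eqP e3']];
case/orP: E4 => [E4 | /andP [/eqP e4 /eqP e4']]; try lia.
- by left; exists a1, a2, a3, a4, c1, c2, c3, c4; fin.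
- by left; exists a1, a2, a3, i, c1, c2, c3, b; rewrite -e4 in fb *; fin.
- case: (ltnP b c4) => hb.
    by left; exists a1, a2, i, a4, c1, c2, b, c4; rewrite -e3 in fb *; fin.
  by right; right; exists a1, c1, a2, c2, a4, c4; fin.
- by left; exists a1, i, a3, a4, c1, a, c3, c4; rewrite -e2 in fa *; fin.
- case: (ltnP c2 a) => ha.
    by left; exists i, a2, a3, a4, a, c2, c3, c4; rewrite -e1 in fa *; fin.
  by right; left; exists a2, c2, a3, c3, a4, c4; fin.
Qed.

Lemma pair1 (f : nat -> nat -> bool) i z z' b : T1 f i z -> T1 f i z' -> z < b -> b < z' -> f i b -> hasD4 f.
Proof.
case=> ra [ca [rc [cc [rd [cd [[? ? ? ? [? ?]] [? ? ?]]]]]]].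
case=> ra' [ca' [rc' [cc' [rd' [cd' [[? ? ? ? [? ?]] [? ? ?]]]]]]] ? ? fb.
by exists ra, i, rc', rd', ca, b, cc', cd'; fin.
Qed.

Lemma pair2 (f : nat -> nat -> bool) i z z' b : T2 f i z -> T2 f i z' -> z < b -> b < z' -> f i b -> hasD4 f.
Proof.
case=> ra [ca [rb [cb [rd [cd [[? ? ? ? [? ?]] [? ? ?]]]]]]].
case=> ra' [ca' [rb' [cb' [rd' [cd' [[? ? ? ? [? ?]] [? ? ?]]]]]]] ? ? fb.
by exists ra, rb, i, rd', ca, cb, b, cd'; fin.
Qed.

Lemma pair3 (f : nat -> nat -> bool) i a a' : T3 f i a' -> a < a' -> f i a -> hasD4 f.
Proof.
case=> r2 [c2 [r3 [c3 [r4 [c4 [[? ? ? ? [? ?]] [? ? ?]]]]]]] ? fa.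
by exists i, r2, r3, r4, a, c2, c3, c4; fin.
Qed.

Lemma pair4 (f : nat -> nat -> bool) i z z' b b' : T4 f i z b -> T4 f i z' b' -> z < b -> b < z' -> f i b -> hasP f.
Proof.
case=> r1 [c1 [r2 [c2 [r4 [c4 [[? ? ? ? [? [? ?]]] [? ? ?]]]]]]].
case=> r1' [c1' [r2' [c2' [r4' [c4' [[? ? ? ? [? [? ?]]] [? ? ?]]]]]]] ? ? fb.
by exists r1, r2, i, r4', c1, c2, b, c4'; fin.
Qed.

Lemma typ (f : nat -> nat -> bool) i a z b : ~ hasD4 f -> ~ hasP f -> f i a -> f i b -> a < z -> z < b ->
  hasD4 (flip f i z) \/ hasP (flip f i z) -> [\/ T1 f i z, T2 f i z, T3 f i a | T4 f i z b].
Proof.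
move=> nD nP fa fb az zb [H|H].
  by case: (typeD4 fa fb az zb H) => [//|[]]; [constructor 1|constructor 2].
by case: (typeP fa fb az zb H) => [//|[]]; [constructor 3|constructor 4].
Qed.

Ltac close_chain := repeat match goal with
 | H1 : is_true (?x < ?y), H2 : is_true (?y < ?z) |- _ =>
   lazymatch goal with
   | _ : is_true (x < z) |- _ => fail
   | _ => have := ltn_trans H1 H2 => ?
   end
 end.

Ltac pairs nD nP f i :=
  match goal with
  | H : T1 f i ?z, H' : T1 f i ?z', Hb : is_true (f i ?b) |- _ =>
      apply: nD; exact: (pair1 H H' (b := b) ltac:(assumption) ltac:(assumption) Hb)
  | H : T2 f i ?z, H' : T2 f i ?z', Hb : is_true (f i ?b) |- _ =>
      apply: nD; exact: (pair2 H H' (b := b) ltac:(assumption) ltac:(assumption) Hb)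
  | H : T4 f i ?z ?b, H' : T4 f i ?z' ?b', Hb : is_true (f i ?b) |- _ =>
      apply: nP; exact: (pair4 H H' ltac:(assumption) ltac:(assumption) Hb)
  | H : T3 f i ?a', Ha : is_true (f i ?a) |- _ =>
      apply: nD; exact: (pair3 H (a := a) ltac:(assumption) Ha)
  end.

Lemma row_abs (f : nat -> nat -> bool) i n : ~ hasD4 f -> ~ hasP f ->
  (forall z, z < n -> f i z = false -> hasD4 (flip f i z) \/ hasP (flip f i z)) ->
  (forall b, f i b -> b < n) -> zr true (f i) 0 n <= 6.
Proof.
move=> nD nP crit bnd; rewrite leqNgt; apply/negP => /(@zr_altT (f i) n 0 5).
case=> o1 [_ f1 [z1 [o1z1 /negbTE g1 [o2 [z1o2 f2 [z2 [o2z2 /negbTE g2 [o3 [z2o3 f3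
  [z3 [o3z3 /negbTE g3 [o4 [z3o4 f4 [z4 [o4z4 /negbTE g4 [o5 [z4o5 f5
  [z5 [o5z5 /negbTE g5 [o6 [z5o6 f6 _]]]]]]]]]]]]]]]]]]]]].
have := bnd _ f6 => hn.
close_chain.
have C1 := typ nD nP f1 f2 o1z1 z1o2 (crit z1 ltac:(assumption) g1).
have C2 := typ nD nP f2 f3 o2z2 z2o3 (crit z2 ltac:(assumption) g2).
have C3 := typ nD nP f3 f4 o3z3 z3o4 (crit z3 ltac:(assumption) g3).
have C4 := typ nD nP f4 f5 o4z4 z4o5 (crit z4 ltac:(assumption) g4).
have C5 := typ nD nP f5 f6 o5z5 z5o6 (crit z5 ltac:(assumption) g5).
case: C1 => ?; case: C2 => ?; try pairs nD nP f i;
case: C3 => ?; try pairs nD nP f i;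
case: C4 => ?; try pairs nD nP f i;
case: C5 => ?; pairs nD nP f i.
Qed.

From Stdlib Require Import Classical FunctionalExtensionality.

Lemma row_part : row_bounded (Av F_D4_P).
Proof.
exists 6 => m n M [CM crit] i.
rewrite (@row_zr _ _ M i (ent M) (@entE _ _ M)).
have [nD nP] := (AvE M).1 CM.
apply: row_abs => //.
- move=> z hz hf.
  have E : ent (Defs.set1 M i (Ordinal hz)) = flip (ent M) i z.
    by apply: functional_extensionality => a; apply: functional_extensionality => b; rewrite ent_set1.
  have := crit i (Ordinal hz); rewrite -entE /= => /(_ hf); rewrite AvE E => H.
  by case: (classic (hasD4 (flip (ent M) i z))) => HD; [left|right; apply: NNPP => HP; apply: H].
- by move=> b /ent_bound [].
Qed.

Definition zeros m n (M : 'M[bool]_(m, n)) := [set p : 'I_m * 'I_n | ~~ M p.1 p.2].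

Lemma crit_ext m n (M : 'M[bool]_(m, n)) : Av F_D4_P M ->
  exists M', critical (Av F_D4_P) M' /\ forall a b, M a b -> M' a b.
Proof.
move: {2}#|zeros M| (leqnn #|zeros M|) => k.
elim: k M => [|k IH] M hk hAv.
  exists M; split => // ; split => // i j Mij.
  have : (i, j) \in zeros M by rewrite inE Mij.
  have Z0 : #|zeros M| = 0 by lia.
  by rewrite (card0_eq Z0).
case: (classic (critical (Av F_D4_P) M)) => [cM|ncM]; first by exists M.
have [i [j [Mij Av1]]] : exists i j, M i j = false /\ Av F_D4_P (Defs.set1 M i j).
  apply: NNPP => H; apply: ncM; split => // i j Mij Av1; apply: H; by exists i, j.
have sub : forall a b, M a b -> Defs.set1 M i j a b by move=> a b Mab; rewrite /Defs.set1 mxE Mab.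
have lt : #|zeros (Defs.set1 M i j)| < #|zeros M|.
  apply: proper_card; apply/properP; split.
    by apply/subsetP => -[a b]; rewrite !inE; apply: contra; apply: sub.
  by exists (i, j); rewrite !inE /= ?Mij // /Defs.set1 mxE !eqxx orbT.
have [M' [cM' sub']] := IH (Defs.set1 M i j) ltac:(lia) Av1.
by exists M'; split => // a b /sub /sub'.
Qed.

Definition Mex n : 'M[bool]_((2 * n).+1, (2 * n + 6)) :=
  \matrix_(i, j) ((nat_of_ord i %% 2 == 0) &&
     [|| nat_of_ord j == 0, nat_of_ord j + i == 2 * n | nat_of_ord j + i == 2 * n + 5]).

Lemma entMex n a b : ent (Mex n) a b ->
  [/\ a <= 2 * n, a %% 2 = 0 & (b = 0 \/ b + a = 2 * n \/ b + a = 2 * n + 5)].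
Proof.
case/entP=> i [j [<- <-]]; rewrite /Mex mxE => /andP [/eqP h /or3P H].
split => //; first by have := ltn_ord i; lia.
by case: H => /eqP; lia.
Qed.

Lemma entMexI n a b : a < (2 * n).+1 -> b < (2 * n + 6) -> a %% 2 = 0 ->
  (b = 0 \/ b + a = 2 * n \/ b + a = 2 * n + 5) -> ent (Mex n) a b.
Proof.
move=> ha hb h2 H; apply/entP; exists (Ordinal ha), (Ordinal hb); split => //.
rewrite /Mex mxE /= h2 eqxx /=.
by case: H => [->|[->|->]]; rewrite eqxx ?orbT.
Qed.

Lemma Mex_av n : Av F_D4_P (Mex n).
Proof.
apply/AvE; split.
  case=> a0 [a1 [a2 [a3 [b0 [b1 [b2 [b3 [[? ? ? ? [? ?]] [E0 E1 E2 E3]]]]]]]]].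
  move/entMex: E0 => [? ? ?]; move/entMex: E1 => [? ? ?].
  move/entMex: E2 => [? ? ?]; move/entMex: E3 => [? ? ?].
  lia.
case=> a1 [a2 [a3 [a4 [c1 [c2 [c3 [c4 [[? ? ? ? [? [? ?]]] [E1 E2 E3 E4]]]]]]]]].
move/entMex: E1 => [? ? ?]; move/entMex: E2 => [? ? ?].
move/entMex: E3 => [? ? ?]; move/entMex: E4 => [? ? ?].
lia.
Qed.

Lemma ent_sub m n (M M' : 'M[bool]_(m, n)) a b : (forall i j, M i j -> M' i j) -> ent M a b -> ent M' a b.
Proof. by move=> H /entP [i [j [<- <- Mij]]]; rewrite entE; apply: H. Qed.

Lemma col_part : ~ column_bounded (Av F_D4_P).
Proof.
case=> B HB.
pose n := B + 2.
have [M' [cM' sub]] := crit_ext (@Mex_av n).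
have [_ nP] := (AvE M').1 cM'.1.
have h0 : 0 < 2 * n + 6 by lia.
have := HB _ _ M' cM' (Ordinal h0).
rewrite (@col_zr _ _ M' _ (ent M') (@entE _ _ M')) /=.
have : B.+1 <= zr true (fun a => ent M' a 0) 0 (2 * n).+1.
  apply: zr_lower => [|t ht]; first lia.
  have E : forall a b, a < (2 * n).+1 -> b < 2 * n + 6 -> a %% 2 = 0 ->
      (b = 0 \/ b + a = 2 * n \/ b + a = 2 * n + 5) -> ent M' a b.
    by move=> a b ? ? ? ?; apply: (ent_sub sub); apply: entMexI.
  split; first by rewrite add0n; apply: E; lia.
  apply/negP => H; apply: nP.
  exists (2 * t), (2 * t).+1, (2 * t + 2), (2 * t + 4), (2 * n - 2 * t), 0, (2 * n - 2 * t - 2), (2 * n - 2 * t + 1).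
  split; first by split; lia.
  split; [apply: E; lia | by rewrite add0n in H | apply: E; lia | apply: E; lia].
lia.
Qed.

Theorem proposition4p1 :
  row_bounded (Av F_D4_P) /\ ~ column_bounded (Av F_D4_P).
Proof. split; [exact: row_part | exact: col_part]. Qed.
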